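(* Knowledge of the joining pairs alone does not determine the subtrajectory join result; that is, the breaking points are necessary. Precisely: there exist parameters $\epsilon_{sp}>0$, $\epsilon_t\ge 0$, $\delta t$ and two inputs $(R,S)$ and $(R',S')$ of the subtrajectory join such that the sets of joining pairs $JP(R,S)$ and $JP(R',S')$ are equal, but the sets of maximally matching pairs of subtrajectories returned by the subtrajectory join on $(R,S)$ and on $(R',S')$ are different (the second input differing from the first by an additional point of a trajectory that is a breaking point).
   Context: A trajectory $r$ is a finite sequence of timestamped planar points $r_1,\dots,r_N$, $r_i=(x_i,y_i,t_i)$, with increasing timestamps; a subtrajectory $r_{i,j}$ ($i<j$) is the contiguous subsequence $r_i,\dots,r_j$. $DistS$ is the Euclidean distance of the $(x,y)$ coordinates and $DistT(r_i,s_j)=|r_i.t-s_j.t|$. For (sub)trajectories $r=r_1..r_N$ and $s=s_1..s_M$ the common lifespan duration is $\Delta w_{r,s}=\min(r_N.t,s_M.t)-\max(r_1.t,s_1.t)$. Given a spatial threshold $\epsilon_{sp}$, temporal tolerance $\epsilon_t$ and duration $\delta t$, a pair of subtrajectories $(r',s')$ is matching iff $\Delta w_{r',s'}\ge \delta t-2\epsilon_t$, every point of $r'$ has some point of $s'$ within spatial distance $\epsilon_{sp}$ and temporal distance $\epsilon_t$, and every point of $s'$ has some point of $r'$ within these distances. A matching pair $(r',s')$ with $r'$ a subtrajectory of $r$ and $s'$ of $s$ is maximally matching iff there is no subtrajectory $r''\supsetneq r'$ of $r$ or $s''\supsetneq s'$ of $s$ such that $(r'',s')$, $(r',s'')$ or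 $(r'',s'')$ is matching. For two sets of trajectories $R,S$, the subtrajectory join returns all maximally matching pairs $(r',s')$ with $r'$ a subtrajectory of some $r\in R$ and $s'$ of some $s\in S$. A joining pair is a pair of points $(r_i,s_j)$, $r_i$ a point of a trajectory in $R$, $s_j$ a point of a trajectory in $S$, with $DistS(r_i,s_j)\le\epsilon_{sp}$ and $DistT(r_i,s_j)\le\epsilon_t$; $JP(R,S)$ is the set of joining pairs. A point is a breaking point if it belongs to no joining pair. *)

(* Defs.v *)
From Stdlib Require Import Reals Lra List Sorted.
Import ListNotations.
Open Scope R_scope.

Record point := mkPoint { px : R; py : R; pt : R }.

Definition valid_traj (r : list point) : Prop :=
  r <> [] /\ Sorted (fun a b => pt a < pt b) r.

(* r' = r_{i,j} (0-indexed, i < j): contiguous subsequence r_i..r_j. *)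
Definition is_subtraj (r' r : list point) : Prop :=
  exists i j : nat, (i < j)%nat /\ (j < length r)%nat /\
    r' = firstn (S j - i) (skipn i r).

Definition DistS (p q : point) : R :=
  sqrt ((px p - px q) ^ 2 + (py p - py q) ^ 2).

Definition DistT (p q : point) : R := Rabs (pt p - pt q).

Definition dummy : point := mkPoint 0 0 0.
Definition first_t (r : list point) : R := pt (hd dummy r).
Definition last_t (r : list point) : R := pt (last r dummy).

Definition lifespan (r s : list point) : R :=
  Rmin (last_t r) (last_t s) - Rmax (first_t r) (first_t s).

Definition close (esp et : R) (p q : point) : Prop :=
  DistS p q <= esp /\ DistT p q <= et.

Definition matching (esp et dt : R) (r s : list point) : Prop :=
  lifespan r s >= dt - 2 * et /\
  (forall p, In p r -> exists q, In q s /\ close esp et p q) /\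
  (forall q, In q s -> exists p, In p r /\ close esp et p q).

Definition strict_super (r1 r2 r : list point) : Prop :=
  is_subtraj r2 r /\ (exists a b, r2 = a ++ r1 ++ b) /\ r2 <> r1.

Definition maximally_matching (esp et dt : R) (r' s' r s : list point) : Prop :=
  is_subtraj r' r /\ is_subtraj s' s /\ matching esp et dt r' s' /\
  (forall r'', strict_super r' r'' r -> ~ matching esp et dt r'' s') /\
  (forall s'', strict_super s' s'' s -> ~ matching esp et dt r' s'') /\
  (forall r'' s'', strict_super r' r'' r -> strict_super s' s'' s ->
      ~ matching esp et dt r'' s'').

Definition subtraj_join (esp et dt : R) (RR SS : list (list point))
    (r' s' : list point) : Prop :=
  exists r s, In r RR /\ In s SS /\ maximally_matching esp et dt r' s' r s.

Definition JP (esp et : R) (RR SS : list (list point)) (p q : point) : Prop :=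
  (exists r, In r RR /\ In p r) /\ (exists s, In s SS /\ In q s) /\
  close esp et p q.

Definition breaking_point (esp et : R) (RR SS : list (list point)) (p : point) : Prop :=
  ((exists r, In r RR /\ In p r) \/ (exists s, In s SS /\ In p s)) /\
  (forall q, ~ JP esp et RR SS p q) /\ (forall q, ~ JP esp et RR SS q p).

(* Main.v *)
Require Import Defs.
From Stdlib Require Import Reals List Lra Lia Sorted.
Import ListNotations.
Open Scope R_scope.

Definition A0 := mkPoint 0 0 0.
Definition B0 := mkPoint 0 0 2.
Definition P0 := mkPoint 10 0 1.

Lemma abs0 x : Rabs x <= 0 -> x = 0.
Proof. unfold Rabs; destruct Rcase_abs; lra. Qed.

Lemma close_refl q : close 1 0 q q.
Proof.
  unfold close, DistS, DistT.
  replace ((px q - px q) ^ 2 + (py q - py q) ^ 2) with 0 by ring.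
  rewrite sqrt_0. replace (pt q - pt q) with 0 by ring.
  rewrite Rabs_R0. lra.
Qed.

Lemma P0_far q : In q [A0; B0] -> ~ close 1 0 P0 q.
Proof.
  intros Hq [_ H]. unfold DistT in H. apply abs0 in H.
  simpl in Hq; destruct Hq as [<-|[<-|[]]]; simpl in H; lra.
Qed.

Lemma P0_far' q : In q [A0; B0] -> ~ close 1 0 q P0.
Proof.
  intros Hq [_ H]. unfold DistT in H. apply abs0 in H.
  simpl in Hq; destruct Hq as [<-|[<-|[]]]; simpl in H; lra.
Qed.

Lemma sub_AB r : is_subtraj r [A0; B0] -> r = [A0; B0].
Proof.
  intros (i & j & Hij & Hj & ->). simpl in Hj.
  destruct i as [|[|i]]; destruct j as [|[|j]]; try lia. reflexivity.
Qed.

Lemma notsub : ~ is_subtraj [A0; B0] [A0; P0; B0].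
Proof.
  intros (i & j & Hij & Hj & E). simpl in Hj.
  destruct i as [|[|[|i]]]; destruct j as [|[|[|j]]]; try lia; simpl in E;
  injection E; intros; subst;
  repeat match goal with H : _ = _ |- _ => apply (f_equal pt) in H; simpl in H end; lra.
Qed.

Lemma match_AB : matching 1 0 0 [A0; B0] [A0; B0].
Proof.
  split; [|split].
  - unfold lifespan, last_t, first_t; simpl.
    unfold Rmin, Rmax; repeat destruct Rle_dec; lra.
  - intros p Hp; exists p; split; [exact Hp| apply close_refl].
  - intros p Hp; exists p; split; [exact Hp| apply close_refl].
Qed.

Lemma no_strict r'' : ~ strict_super [A0; B0] r'' [A0; B0].
Proof.
  intros (H1 & _ & H3). apply sub_AB in H1. congruence.
Qed.

Theorem lemma1 :
  exists (esp et dt : R) (RR SS RR' SS' : list (list point)),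
    esp > 0 /\ et >= 0 /\
    (forall r, In r RR -> valid_traj r) /\ (forall s, In s SS -> valid_traj s) /\
    (forall r, In r RR' -> valid_traj r) /\ (forall s, In s SS' -> valid_traj s) /\
    (forall p q, JP esp et RR SS p q <-> JP esp et RR' SS' p q) /\
    ~ (forall r' s', subtraj_join esp et dt RR SS r' s' <->
                     subtraj_join esp et dt RR' SS' r' s') /\
    SS' = SS /\
    (exists (R1 R2 : list (list point)) (r : list point) (k : nat) (p : point),
        RR = R1 ++ r :: R2 /\
        RR' = R1 ++ (firstn k r ++ p :: skipn k r) :: R2 /\
        breaking_point esp et RR' SS' p).
Proof.
  assert (VAB : valid_traj [A0; B0]).
  { split; [discriminate|]. repeat constructor; simpl; lra. }
  assert (VAPB : valid_traj [A0; P0; B0]).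
  { split; [discriminate|]. repeat constructor; simpl; lra. }
  exists 1, 0, 0, [[A0; B0]], [[A0; B0]], [[A0; P0; B0]], [[A0; B0]].
  split; [lra|]. split; [lra|].
  split; [intros r [<-|[]]; exact VAB|].
  split; [intros r [<-|[]]; exact VAB|].
  split; [intros r [<-|[]]; exact VAPB|].
  split; [intros r [<-|[]]; exact VAB|].
  split.
  { intros p q; split.
    - intros ((r & [<-|[]] & Hp) & Hs & Hc).
      split; [|split; assumption].
      exists [A0; P0; B0]; split; [left; reflexivity|].
      simpl in Hp |- *; tauto.
    - intros ((r & [<-|[]] & Hp) & (s & [<-|[]] & Hq) & Hc).
      split; [|split; [exists [A0; B0]; split; [left|]; auto | exact Hc]].
      exists [A0; B0]; split; [left; reflexivity|].
      simpl in Hp; destruct Hp as [<-|[<-|[<-|[]]]]; simpl; auto.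
      exfalso; exact (P0_far q Hq Hc). }
  split.
  { intros H. destruct (H [A0; B0] [A0; B0]) as [H1 _].
    assert (J : subtraj_join 1 0 0 [[A0; B0]] [[A0; B0]] [A0; B0] [A0; B0]).
    { exists [A0; B0], [A0; B0]. split; [left; reflexivity|].
      split; [left; reflexivity|].
      split; [exists 0%nat, 1%nat; simpl; repeat split; lia|].
      split; [exists 0%nat, 1%nat; simpl; repeat split; lia|].
      split; [exact match_AB|].
      split; [intros r'' Hs; exfalso; exact (no_strict _ Hs)|].
      split; [intros r'' Hs; exfalso; exact (no_strict _ Hs)|].
      intros r'' s'' Hs; exfalso; exact (no_strict _ Hs). }
    destruct (H1 J) as (r & s & [<-|[]] & _ & Hm).
    destruct Hm as [Hsub _]. exact (notsub Hsub). }
  split; [reflexivity|].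
  exists [], [], [A0; B0], 1%nat, P0.
  split; [reflexivity|]. split; [reflexivity|].
  split; [left; exists [A0; P0; B0]; split; simpl; auto|].
  split.
  - intros q (_ & (s & [<-|[]] & Hq) & Hc). exact (P0_far q Hq Hc).
  - intros q (_ & (s & [<-|[]] & Hq) & Hc).
    simpl in Hq; destruct Hq as [E|[E|[]]];
    apply (f_equal pt) in E; simpl in E; lra.
Qed.
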